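(* For every finite nonempty set of points $Z\subset\mathbb{S}_1$ and every positive integer $m$ one has $\alpha(mZ)<\alpha((m+5)Z)$.
   Context: Let $P_1\in\mathbb{P}^2(\mathbb{C})$ be a point and $f\colon\mathbb{S}_1\to\mathbb{P}^2$ the blow-up of $\mathbb{P}^2$ at $P_1$, with exceptional curve $E_1=f^{-1}(P_1)$; let $H$ be the pullback of the class of a line. Let $\mathbb{L}_1=3H-E_1=-K_{\mathbb{S}_1}$. For a finite set $Z\subset\mathbb{S}_1$ with ideal sheaf $\mathcal{I}_Z$ and a positive integer $m$, the initial degree is $\alpha(mZ)=\min\{d\ge 0:\ H^0(\mathbb{S}_1,d\mathbb{L}_1\otimes\mathcal{I}_Z^{(m)})\neq 0\}$, i.e. the least $d$ such that some effective divisor $D\in|d\mathbb{L}_1|$ has multiplicity at least $m$ at every point of $Z$. *)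

(* Defs.v *)
From mathcomp Require Import all_boot all_algebra.
From mathcomp Require Import complex Rstruct.
From mathcomp Require Import mpoly.

Set Implicit Arguments.
Unset Strict Implicit.
Unset Printing Implicit Defensive.

Import GRing.Theory.
Local Open Scope ring_scope.

Definition C : Type := (Rdefinitions.R)[i].

(* Homogeneous coordinates: a point of P^2(C) is represented by a nonzero
   column vector in C^3.  Homogeneous polynomials in x_0,x_1,x_2 are
   elements of {mpoly C[3]}. *)
Definition vec3 := 'cV[C]_3.

(* A polynomial G in k variables vanishes to order >= m at the origin:
   every monomial occurring in G has total degree >= m (vacuous if G = 0). *)
Definition vanish_ord (k : nat) (G : {mpoly C[k]}) (m : nat) : Prop :=
  forall mon, mon \in msupp G -> (m <= mdeg mon)%N.

(* Translation X |-> q + X, used to compute multiplicities at the point [q]: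
   for a homogeneous F, mult_[q](V(F)) = order of F(q + X) at X = 0
   (multiplicity of the affine cone at the non-vertex point q). *)
Definition shift3 (q : vec3) : 3.-tuple {mpoly C[3]} :=
  [tuple (q i ord0)%:MP + 'X_i | i < 3].

(* Local chart of the blow-up at p around a point of the exceptional curve.
   A is a frame (basis) of C^3 whose column 0 is p; with v := col 1 A and
   w := col 2 A, the chart is (u,t) |-> [p + u v + u t w], whose exceptional
   curve is {u = 0}, and the point (0,0) is the tangent direction of the line
   through [p] and [v]. *)
Definition chart (A : 'M[C]_3) : 3.-tuple {mpoly C[2]} :=
  [tuple (A i 0)%:MP
         + 'X_(ord0 : 'I_2) * (A i 1)%:MP
         + 'X_(ord0 : 'I_2) * 'X_(ord_max : 'I_2) * (A i 2)%:MP | i < 3].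

(* Points of S_1 = Bl_{P_1} P^2:
   - OffE q : the point of S_1 over [q] in P^2 \ {P_1};
   - OnE A  : the point of E_1 given by the tangent direction of the line
              through P_1 and [col 1 A] (A a frame with col 0 A = P_1).  *)
Inductive S1pt : Type :=
  | OffE of vec3
  | OnE of 'M[C]_3.

(* Validity of the representation, relative to P_1 = [p]. *)
Definition valid_pt (p : vec3) (x : S1pt) : Prop :=
  match x with
  | OffE q => \rank (row_mx p q) = 2%N          (* q <> 0 and [q] <> [p] *)
  | OnE A => A \in unitmx /\ col 0 A = p
  end.

(* A nonzero element of H^0(S_1, d L_1) = H^0(S_1, 3dH - dE_1) is given by
   a nonzero form F of degree 3d with mult_{P_1} F >= d; its divisor is
   D = f^*V(F) - d E_1. *)
Definition is_section (p : vec3) (d : nat) (F : {mpoly C[3]}) : Prop :=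
  [/\ F != 0, F \is (3 * d)%N.-homog & vanish_ord (comp_mpoly (shift3 p) F) d].

(* mult_x(D) >= m, for D = f^*V(F) - d E_1.  Off E_1 this is the
   multiplicity of V(F) at [q]; on E_1, in the chart (u,t), the local equation
   of D is u^{-d} F(p + u v + u t w), whose order is ord(F(chart)) - d. *)
Definition mult_ge (d : nat) (F : {mpoly C[3]}) (x : S1pt) (m : nat) : Prop :=
  match x with
  | OffE q => vanish_ord (comp_mpoly (shift3 q) F) m
  | OnE A => vanish_ord (comp_mpoly (chart A) F) (m + d)
  end.

Definition has_section (p : vec3) (m : nat) (Z : seq S1pt) (d : nat) : Prop :=
  exists F, is_section p d F /\ forall x, List.In x Z -> mult_ge d F x m.

(* a = alpha(mZ): the least d with H^0(S_1, d L_1 (x) I_Z^{(m)}) <> 0. *)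
Definition is_alpha (p : vec3) (m : nat) (Z : seq S1pt) (a : nat) : Prop :=
  has_section p m Z a /\ forall d, has_section p m Z d -> (a <= d)%N.

(* Main.v *)
Require Import Defs.
From mathcomp Require Import all_boot all_algebra.
From mathcomp Require Import complex Rstruct.
From mathcomp Require Import mpoly.
From mathcomp Require Import ring zify.
From Stdlib Require Import Classical.
Set Implicit Arguments.
Unset Strict Implicit.
Unset Printing Implicit Defensive.
Import GRing.Theory Num.Theory.
Local Open Scope ring_scope.


Section Van.
Variable k : nat.
Implicit Types G H : {mpoly C[k]}.

Lemma vanE G a : vanish_ord G a <-> (forall mon, (mdeg mon < a)%N -> G@_mon = 0).
Proof.
split=> [h mon lt|h mon].
  by apply/eqP; rewrite mcoeff_eq0; apply/negP=> /h; rewrite leqNgt lt.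
rewrite mcoeff_msupp; case: ltnP => // /h ->; by rewrite eqxx.
Qed.

Lemma van0 G : vanish_ord G 0.
Proof. by []. Qed.

Lemma vanW G a b : (b <= a)%N -> vanish_ord G a -> vanish_ord G b.
Proof. by move=> ba h mon /h; apply: leq_trans. Qed.

Lemma van_zero a : vanish_ord (0 : {mpoly C[k]}) a.
Proof. by move=> mon; rewrite mcoeff_msupp mcoeff0 eqxx. Qed.

Lemma vanD G H a : vanish_ord G a -> vanish_ord H a -> vanish_ord (G + H) a.
Proof.
move=> /vanE hG /vanE hH; apply/vanE=> mon lt.
by rewrite mcoeffD hG // hH // addr0.
Qed.

Lemma vanN G a : vanish_ord G a -> vanish_ord (- G) a.
Proof. by move=> /vanE hG; apply/vanE=> mon lt; rewrite mcoeffN hG // oppr0. Qed.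

Lemma vanB G H a : vanish_ord G a -> vanish_ord H a -> vanish_ord (G - H) a.
Proof. by move=> hG hH; apply: vanD => //; apply: vanN. Qed.

Lemma vanZ c G a : vanish_ord G a -> vanish_ord (c *: G) a.
Proof. by move=> /vanE hG; apply/vanE=> mon lt; rewrite mcoeffZ hG // mulr0. Qed.

Lemma vansum (I : Type) (r : seq I) (F : I -> {mpoly C[k]}) a :
  (forall i, vanish_ord (F i) a) -> vanish_ord (\sum_(i <- r) F i) a.
Proof.
move=> h; elim: r => [|x r IH]; first by rewrite big_nil; apply: van_zero.
by rewrite big_cons; apply: vanD.
Qed.

Lemma vanM G H a b : vanish_ord G a -> vanish_ord H b -> vanish_ord (G * H) (a + b).
Proof.
move=> hG hH mon /msuppM_le /allpairsP [[m1 m2] [/= /hG h1 /hH h2 ->]].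
by rewrite mdegD leq_add.
Qed.

Lemma vanXn G a j : vanish_ord G a -> vanish_ord (G ^+ j) (a * j).
Proof.
move=> h; elim: j => [|j IH]; first by rewrite muln0.
by rewrite exprS mulnS; apply: vanM.
Qed.

Lemma vanX i : vanish_ord ('X_i : {mpoly C[k]}) 1.
Proof. by move=> mon; rewrite msuppX inE => /eqP ->; rewrite mdeg1. Qed.

Lemma vanXM i G a : vanish_ord G a -> vanish_ord ('X_i * G) a.+1.
Proof. by move=> h; rewrite -add1n; apply: vanM => //; apply: vanX. Qed.

Lemma vanXM_inv i G a : vanish_ord ('X_i * G) a -> vanish_ord G a.-1.
Proof.
move=> /vanE h; apply/vanE=> mon lt.
have := h (U_(i) + mon)%MM; rewrite (mulrC _ G) mcoeffMX => -> //.
rewrite mdegD mdeg1 add1n; case: a lt h => //.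
Qed.

Lemma van1 G : vanish_ord G 1 <-> G@_0%MM = 0.
Proof.
rewrite vanE; split=> [h|h mon]; first by apply: h; rewrite mdeg0.
by rewrite ltnS leqn0 mdeg_eq0 => /eqP ->.
Qed.

Lemma vanC c a : (0 < a)%N -> vanish_ord (c%:MP : {mpoly C[k]}) a -> c = 0.
Proof.
move=> a0 /vanE h; have := h 0%MM; rewrite mdeg0 mcoeffC eqxx mulr1; exact.
Qed.

Lemma van_deriv G a i : vanish_ord G a -> vanish_ord (G^`M(i)) a.-1.
Proof.
move=> /vanE h; apply/vanE=> mon lt; rewrite mcoeff_deriv h ?mul0rn //.
by rewrite mdegD mdeg1 addn1; case: a lt h.
Qed.

End Van.


Section Deriv.
Variable k : nat.
Implicit Types G H : {mpoly C[k]}.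

Lemma coef_XM_deriv G (j : 'I_k) mon :
  ('X_j * G^`M(j))@_mon = G@_mon *+ mon j.
Proof.
case: (posnP (mon j)) => [e0|pos].
  rewrite e0 mulr0n; apply: memN_msupp_eq0; apply/negP.
  rewrite mulrC (perm_mem (msuppMX _ _)) => /mapP [m' _ e].
  by move: e0; rewrite e mnmDE mnm1E eqxx.
have le : (U_(j) <= mon)%MM.
  by apply/mnm_lepP=> l; rewrite mnm1E; case: eqP => // <-.
have e : mon = (U_(j) + (mon - U_(j)))%MM by rewrite addmC submK.
rewrite [in LHS]e mulrC mcoeffMX mcoeff_deriv addmC -e mnmBE mnm1E eqxx.
by rewrite subn1 prednK.
Qed.

Lemma coef_euler G mon :
  (\sum_(j < k) 'X_j * G^`M(j))@_mon = G@_mon *+ mdeg mon.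
Proof.
rewrite raddf_sum /= (eq_bigr (fun j : 'I_k => G@_mon *+ mon j)).
  by rewrite mdegE sumrMnr.
by move=> j _; rewrite coef_XM_deriv.
Qed.

Lemma euler_homog G d : G \is d.-homog ->
  \sum_(j < k) 'X_j * G^`M(j) = d%:R *: G.
Proof.
move=> /dhomogP h; apply/mpolyP=> mon; rewrite coef_euler mcoeffZ.
case: (boolP (mon \in msupp G)) => [/h ->|/memN_msupp_eq0 ->].
  by rewrite mulr_natl.
by rewrite mul0rn mulr0.
Qed.

Lemma homog_deriv G d (j : 'I_k) : G \is d.-homog -> G^`M(j) \is d.-1.-homog.
Proof.
move=> /dhomogP h; apply/dhomogP=> mon.
rewrite mcoeff_msupp mcoeff_deriv => nz.
have : (mon + U_(j))%MM \in msupp G.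
  by rewrite mcoeff_msupp; apply: contraNneq nz => ->; rewrite mul0rn.
move/h => /=; rewrite mdegD mdeg1 addn1 => <-.
by []. Qed.

Lemma exists_deriv_neq0 G d : G != 0 -> G \is d.-homog -> (0 < d)%N ->
  exists j : 'I_k, G^`M(j) != 0.
Proof.
move=> nz hom d0; suff /existsP [j hj] : [exists j, G^`M(j) != 0] by exists j.
apply: contraT; rewrite negb_exists => /forallP h; have := euler_homog hom.
rewrite big1; last by move=> j _; have := h j; rewrite negbK => /eqP ->; rewrite mulr0.
move=> /esym /eqP; rewrite scaler_eq0 => /orP [|/eqP e]; last by rewrite e eqxx in nz.
by rewrite pnatr_eq0; move: d0; case: (d).
Qed.


End Deriv.


Section Chain.
Variables (n k : nat) (lq : n.-tuple {mpoly C[k]}) (i : 'I_k).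

Definition CR (F : {mpoly C[n]}) :=
  (F \mPo lq)^`M(i) = \sum_(j < n) (tnth lq j)^`M(i) * (F^`M(j) \mPo lq).

Lemma CR0 : CR 0.
Proof.
rewrite /CR comp_mpoly0 mderiv0 big1 // => j _.
by rewrite mderiv0 comp_mpoly0 mulr0.
Qed.

Lemma CR1 : CR 1.
Proof.
rewrite /CR comp_mpoly1 -mpolyC1 mderivC big1 // => j _.
by rewrite mderivC comp_mpolyC mpolyC0 mulr0.
Qed.

Lemma CRD F G : CR F -> CR G -> CR (F + G).
Proof.
rewrite /CR => hF hG; rewrite comp_mpolyD mderivD.
apply: etrans (f_equal2 +%R hF hG) _.
under [RHS]eq_bigr => j _ do rewrite mderivD comp_mpolyD mulrDr.
by rewrite big_split.
Qed.

Lemma CRZ c F : CR F -> CR (c *: F).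
Proof.
rewrite /CR => hF; rewrite comp_mpolyZ mderivZ.
apply: etrans (congr1 (fun x => c *: x) hF) _; rewrite scaler_sumr.
by apply: eq_bigr => j _; rewrite mderivZ comp_mpolyZ scalerAr.
Qed.

Lemma CRM F G : CR F -> CR G -> CR (F * G).
Proof.
rewrite /CR => hF hG; rewrite rmorphM mderivM.
apply: etrans (f_equal2 +%R (congr1 (fun x => x * (G \mPo lq)) hF)
   (congr1 (fun x => (F \mPo lq) * x) hG)) _.
rewrite mulr_suml mulr_sumr.
under [RHS]eq_bigr => j _ do rewrite mderivM rmorphD !rmorphM mulrDr.
rewrite big_split /=; congr (_ + _); apply: eq_bigr => j _.
  by rewrite mulrA.
by rewrite mulrCA.
Qed.

Lemma CRX (j : 'I_n) : CR 'X_j.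
Proof.
rewrite /CR comp_mpolyXU (bigD1 j) //= big1 ?addr0.
  rewrite mderivX mnm1E eqxx.
  have -> : (U_(j) - U_(j) = 0)%MM by apply/mnmP => l; rewrite mnmBE subnn mnm0E.
  rewrite mpolyX0 scale1r comp_mpoly1 mulr1.
  by rewrite (tnth_nth 0).
move=> l nl; rewrite mderivX mnm1E eq_sym (negbTE nl) scale0r comp_mpoly0.
by rewrite mulr0.
Qed.

Lemma CRXn (j : 'I_n) e : CR ('X_j ^+ e).
Proof.
elim: e => [|e IHe]; first by rewrite expr0; exact: CR1.
by rewrite exprS; exact: (CRM (CRX j) IHe).
Qed.

Lemma CRXm m : CR 'X_[m].
Proof.
rewrite mpolyXE_id.
elim: (index_enum _) => [|j s IH]; first by rewrite big_nil; exact: CR1.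
by rewrite big_cons; exact: (CRM (CRXn j (m j)) IH).
Qed.

Lemma CRsum (s : seq 'X_{1..n}) (f : 'X_{1..n} -> C) :
  CR (\sum_(m <- s) f m *: 'X_[m]).
Proof.
elim: s => [|m s IH]; first by rewrite big_nil; exact: CR0.
by rewrite big_cons; exact: (CRD (CRZ (f m) (CRXm m)) IH).
Qed.

Lemma chain_rule F : CR F.
Proof. by rewrite [F]mpolyE; exact: CRsum. Qed.

End Chain.


Definition dd (c : vec3) (F : {mpoly C[3]}) : {mpoly C[3]} :=
  \sum_(j < 3) c j 0 *: F^`M(j).

Lemma dX k (l j : 'I_k) : ('X_l : {mpoly C[k]})^`M(j) = (l == j)%:R.
Proof.
rewrite mderivX mnm1E; case: eqP => [->|_]; last by rewrite scale0r.
have -> : (U_(j) - U_(j) = 0)%MM by apply/mnmP => l'; rewrite mnmBE subnn mnm0E.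
by rewrite mpolyX0 scale1r.
Qed.

Lemma dd_homog c F d : F \is d.-homog -> dd c F \is d.-1.-homog.
Proof.
move=> h; rewrite /dd; apply: (big_ind (fun x => x \is d.-1.-homog)).
- exact: dhomog0.
- by move=> x y; apply: dhomogD.
- by move=> j _; apply: dhomogZ; apply: homog_deriv.
Qed.

Lemma shift_d q F (j : 'I_3) :
  (F \mPo shift3 q)^`M(j) = F^`M(j) \mPo shift3 q.
Proof.
rewrite chain_rule (bigD1 j) //= big1 ?addr0.
  by rewrite tnth_mktuple mderivD mderivC add0r dX eqxx mul1r.
move=> l nl; rewrite tnth_mktuple mderivD mderivC add0r dX (negbTE nl).
by rewrite mul0r.
Qed.

Lemma dd_shift c q F :
  dd c F \mPo shift3 q = \sum_(j < 3) c j 0 *: (F \mPo shift3 q)^`M(j).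
Proof.
rewrite /dd raddf_sum; apply: eq_bigr => j _.
by rewrite /= comp_mpolyZ shift_d.
Qed.

Lemma van_dd_shift c q F a :
  vanish_ord (F \mPo shift3 q) a -> vanish_ord (dd c F \mPo shift3 q) a.-1.
Proof.
move=> h; rewrite dd_shift; apply: vansum => j; apply: vanZ.
exact: van_deriv.
Qed.

Lemma coef_ddp p F d mon : F \is d.-homog ->
  (dd p F \mPo shift3 p)@_mon =
  (F \mPo shift3 p)@_mon * (d%:R - (mdeg mon)%:R).
Proof.
move=> hom; set H := F \mPo shift3 p.
have E : \sum_(j < 3) ((p j 0)%:MP + 'X_j) * H^`M(j) = d%:R *: H.
  have := congr1 (comp_mpoly (shift3 p)) (euler_homog hom).
  rewrite raddf_sum comp_mpolyZ => <-; apply: eq_bigr => j _.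
  by rewrite /= rmorphM /= comp_mpolyXU -tnth_nth tnth_mktuple shift_d.
have E2 : dd p F \mPo shift3 p =
    d%:R *: H - \sum_(j < 3) 'X_j * H^`M(j).
  rewrite -E dd_shift -/H -sumrB; apply: eq_bigr => j _.
  by rewrite mulrDl addrK mul_mpolyC.
by rewrite E2 mcoeffB mcoeffZ coef_euler mulrBr !mulr_natr mulr_natl.
Qed.


Lemma van_ddp p F d a : F \is d.-homog ->
  vanish_ord (F \mPo shift3 p) a -> vanish_ord (dd p F \mPo shift3 p) a.
Proof.
move=> hom /vanE h; apply/vanE => mon lt.
by rewrite (coef_ddp _ _ hom) h // mul0r.
Qed.

Lemma ddp_zero p F d : F \is d.-homog -> dd p F = 0 ->
  vanish_ord (F \mPo shift3 p) d.
Proof.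
move=> hom e; apply/vanE => mon lt.
have := coef_ddp p mon hom; rewrite e comp_mpoly0 mcoeff0 => /esym/eqP.
rewrite mulf_eq0 subr_eq0 eqr_nat => /orP [/eqP //|/eqP ed].
by rewrite ed ltnn in lt.
Qed.

Lemma dd_delta (j : 'I_3) F : dd (delta_mx j 0) F = F^`M(j).
Proof.
rewrite /dd (bigD1 j) //= big1 ?addr0.
  by rewrite mxE !eqxx scale1r.
by move=> l nl; rewrite mxE (negbTE nl) scale0r.
Qed.


Section ChartLemma.
Variable A : 'M[C]_3.
Local Notation u := ('X_(ord0 : 'I_2) : {mpoly C[2]}).
Local Notation t := ('X_(ord_max : 'I_2) : {mpoly C[2]}).

Lemma n01 : (ord0 == ord_max :> 'I_2) = false. Proof. by []. Qed.
Lemma n10 : (ord_max == ord0 :> 'I_2) = false. Proof. by []. Qed.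

Lemma chart_du (j : 'I_3) :
  (tnth (chart A) j)^`M(ord0) = (A j 1)%:MP + t * (A j 2)%:MP.
Proof.
rewrite tnth_mktuple !mderivD !mderivM !mderivC !dX eqxx n10 /=.
ring.
Qed.

Lemma chart_dt (j : 'I_3) :
  (tnth (chart A) j)^`M(ord_max) = u * (A j 2)%:MP.
Proof.
rewrite tnth_mktuple !mderivD !mderivM !mderivC !dX eqxx n01 /=.
ring.
Qed.


Lemma van_dd_chart c F d a : A \in unitmx -> F \is d.-homog ->
  vanish_ord (F \mPo chart A) a -> vanish_ord (dd c F \mPo chart A) a.-2.
Proof.
move=> uA hom hG.
set G := F \mPo chart A.
pose W (j : 'I_3) := F^`M(j) \mPo chart A.
pose S (l : 'I_3) := \sum_(j < 3) A j l *: W j.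
set Gu := G^`M(ord0); set Gt := G^`M(ord_max).
have E3 : Gt = u * S 2.
  rewrite /Gt /G chain_rule /S mulr_sumr; apply: eq_bigr => j _.
  by rewrite chart_dt -mulrA mul_mpolyC.
have E2 : Gu = S 1 + t * S 2.
  rewrite /Gu /G chain_rule /S mulr_sumr -big_split /=; apply: eq_bigr => j _.
  by rewrite chart_du mulrDl -mulrA !mul_mpolyC.
have E1 : S 0 + u * S 1 + u * t * S 2 = d%:R *: G.
  have := congr1 (comp_mpoly (chart A)) (euler_homog hom).
  rewrite raddf_sum /= comp_mpolyZ -/G => <-.
  rewrite /S !mulr_sumr -!big_split /=; apply: eq_bigr => j _.
  rewrite rmorphM /= comp_mpolyXU -tnth_nth tnth_mktuple -/(W j).
  rewrite -!mul_mpolyC; ring.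
have vGu : vanish_ord Gu a.-1 by apply: van_deriv.
have vGt : vanish_ord Gt a.-1 by apply: van_deriv.
have v2 : vanish_ord (u * S 2) a.-1 by rewrite -E3.
have e1 : u * S 1 = u * Gu - t * Gt by rewrite E2 E3; ring.
have v1 : vanish_ord (u * S 1) a.-1.
  rewrite e1; apply: vanB.
  - exact: (vanW (leqnSn _) (vanXM vGu)).
  - exact: (vanW (leqnSn _) (vanXM vGt)).
have e0 : u * S 0 = u * (d%:R *: G) - u * (u * S 1) - t * (u * (u * S 2)).
  by rewrite -E1; ring.
have v0 : vanish_ord (u * S 0) a.-1.
  rewrite e0; apply: vanB; [apply: vanB|].
  - exact: (vanW (leq_trans (leq_pred a) (leqnSn a)) (vanXM (vanZ (c := d%:R) hG))).
  - exact: (vanW (leqnSn _) (vanXM v1)).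
  - exact: (vanW (leq_trans (leqnSn _) (leqnSn _)) (vanXM (vanXM v2))).
have vS : forall l, vanish_ord (u * S l) a.-1.
  move=> l; have : l = 0 \/ l = 1 \/ l = 2.
    by case: l => [[|[|[|//]]] hl]; [left|right;left|right;right]; apply: val_inj.
  by case=> [->|[->|->]].
pose av := invmx A *m c.
have ec : forall j : 'I_3, c j 0 = \sum_(l < 3) A j l * av l 0.
  by move=> j; rewrite -[c in LHS](mulKVmx uA) mxE.
have -> : dd c F \mPo chart A = \sum_(l < 3) av l 0 *: S l.
  rewrite /dd raddf_sum /=.
  under eq_bigr => j _ do rewrite /= comp_mpolyZ ec -/(W j) scaler_suml.
  rewrite exchange_big /=; apply: eq_bigr => l _.
  rewrite /S scaler_sumr; apply: eq_bigr => j _.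
  by apply/mpolyP => mon; rewrite !mcoeffZ mulrA (mulrC (A j l)).
apply: (vanXM_inv (i := ord0)); rewrite mulr_sumr; apply: vansum => l.
by rewrite -scalerAr; apply: vanZ.
Qed.

End ChartLemma.


Definition Inv (p : vec3) (m : nat) (Z : seq S1pt) (b e : nat) (F : {mpoly C[3]}) :=
  [/\ F != 0, F \is (3 * b - e)%N.-homog,
      vanish_ord (F \mPo shift3 p) (minn b (3 * b - e)) &
      forall x, List.In x Z ->
        match x with
        | OffE q => vanish_ord (F \mPo shift3 q) (m + 5 - e)
        | OnE A => vanish_ord (F \mPo chart A) (m + 5 + b - 2 * e)
        end].

Lemma Inv_step p m Z b e F :
  (forall x, List.In x Z -> valid_pt p x) -> (0 < b)%N -> (e < 3)%N ->
  Inv p m Z b e F -> exists G, Inv p m Z b e.+1 G.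
Proof.
move=> hZ b0 e3 [nz hom vp hx].
have mainG : forall c G, G = dd c F -> G != 0 ->
    vanish_ord (G \mPo shift3 p) (minn b (3 * b - e.+1)) ->
    Inv p m Z b e.+1 G.
  move=> c G eG nzG vG; split; [exact: nzG| |exact: vG|]; rewrite eG.
  - by rewrite subnS; apply: dd_homog.
  - move=> x /[dup] xZ /hx; case: x xZ => [q|A] xZ h.
    + by rewrite subnS; apply: van_dd_shift.
    + have [uA _] := hZ _ xZ.
      apply: (vanW _ (van_dd_chart (c := c) uA hom h)).
      rewrite -subn2; lia.
case: (boolP (dd p F == 0)) => [/eqP z|nzp].
  have vd := ddp_zero hom z.
  have [|j nzj] := exists_deriv_neq0 nz hom; first lia.
  exists (dd (delta_mx j 0) F); apply: (mainG (delta_mx j 0)); [by []|by rewrite dd_delta|].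
  apply: (vanW _ (van_dd_shift (c := delta_mx j 0) vd)); rewrite -subn1; lia.
exists (dd p F); apply: (mainG p); [by []|exact: nzp|].
apply: (vanW _ (van_ddp hom vp)); lia.
Qed.

Lemma homog0_const (F : {mpoly C[3]}) : F \is 0.-homog -> F = (F@_0%MM)%:MP.
Proof.
move=> hom; apply/mpolyP => mon; rewrite mcoeffC.
case: (eqVneq mon 0%MM) => [->|nm]; first by rewrite mulr1.
rewrite mulr0; apply: (dhomog_nemf_coeff hom) => /=.
by rewrite mdeg_eq0.
Qed.

Lemma section_pos p m Z b : Z <> [::] ->
  has_section p (m + 5) Z b -> (0 < b)%N.
Proof.
case: Z => [//|x Z] _ [F [[nz hom _] hx]].
case: b hom hx => [|b] hom hx; last by [].
have eF := homog0_const hom.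
have := hx x (or_introl erefl); rewrite eF; clear hx.
case: x => [q|A] /=; rewrite comp_mpolyC => /vanC h;
  (have e0 : F@_0%MM = 0 by apply: h; lia);
  by move: nz; rewrite eF e0 mpolyC0 eqxx.
Qed.

Lemma Inv0 p m Z b F : (0 < b)%N -> is_section p b F ->
  (forall x, List.In x Z -> mult_ge b F x (m + 5)) -> Inv p m Z b 0 F.
Proof.
move=> b0 [nz hom vp] hx; split; [exact: nz| | |].
- by rewrite subn0.
- by apply: (vanW _ vp); lia.
- move=> x /hx; case: x => [q|A] /=; first by rewrite subn0.
  by rewrite muln0 subn0.
Qed.

Lemma Inv3 p m Z b G : (0 < b)%N -> Inv p m Z b 3 G ->
  is_section p b.-1 G /\ (forall x, List.In x Z -> mult_ge b.-1 G x m).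
Proof.
move=> b0 [nz hom vp hx]; split.
  split; [exact: nz| by have -> : (3 * b.-1 = 3 * b - 3)%N by lia|].
  by apply: (vanW _ vp); lia.
move=> x /hx; case: x => [q|A] /= h; apply: (vanW _ h); lia.
Qed.

Lemma section_down p m Z b :
  (forall x, List.In x Z -> valid_pt p x) -> Z <> [::] ->
  has_section p (m + 5) Z b -> has_section p m Z b.-1.
Proof.
move=> hZ Zne hs; have b0 := section_pos Zne hs.
case: hs => F [sF hx].
have I0 := Inv0 b0 sF hx.
have [G1 I1] := Inv_step (e := 0) hZ b0 isT I0.
have [G2 I2] := Inv_step (e := 1) hZ b0 isT I1.
have [G3 I3] := Inv_step (e := 2) hZ b0 isT I2.
have [s h] := Inv3 b0 I3.
by exists G3.
Qed.


Definition lin (r : 'rV[C]_3) : {mpoly C[3]} := \sum_(i < 3) r 0 i *: 'X_i.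

Lemma lin_homog r : lin r \is 1.-homog.
Proof.
rewrite /lin; apply: (big_ind (fun x => x \is 1.-homog)).
- exact: dhomog0.
- by move=> x y; apply: dhomogD.
- by move=> i _; apply: dhomogZ; rewrite dhomogX /= mdeg1.
Qed.

Lemma lin_coef r (i : 'I_3) : (lin r)@_U_(i) = r 0 i.
Proof.
rewrite /lin raddf_sum (bigD1 i) //= big1 ?addr0.
  by rewrite mcoeffZ mcoeffXU eqxx mulr1.
by move=> j nj; rewrite mcoeffZ mcoeffXU (negbTE nj) mulr0.
Qed.

Lemma lin_neq0 r : r != 0 -> lin r != 0.
Proof.
apply: contraNN => /eqP z; apply/eqP/matrixP => i j.
by rewrite (ord1 i) -lin_coef z mcoeff0 mxE.
Qed.

Lemma lin_comp0 k r (lq : 3.-tuple {mpoly C[k]}) :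
  (lin r \mPo lq)@_0%MM = \sum_(i < 3) r 0 i * (tnth lq i)@_0%MM.
Proof.
have -> : lin r \mPo lq = \sum_(i < 3) r 0 i *: tnth lq i.
  rewrite /lin rmorph_sum; apply: eq_bigr => i _.
  by rewrite /= comp_mpolyZ comp_mpolyXU -tnth_nth.
rewrite raddf_sum; apply: eq_bigr => i _; exact: mcoeffZ.
Qed.

Lemma shift_coef0 q (i : 'I_3) : (tnth (shift3 q) i)@_0%MM = q i 0.
Proof.
rewrite tnth_mktuple mcoeffD mcoeffC eqxx mulr1 mcoeffX.
have -> : ((U_(i) == 0)%MM) = false.
  by apply/negbTE; rewrite -mdeg_eq0 mdeg1.
by rewrite addr0.
Qed.

Lemma chart_coef0 A (i : 'I_3) : (tnth (chart A) i)@_0%MM = A i 0.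
Proof.
rewrite tnth_mktuple !mcoeffD mcoeffC eqxx mulr1.
have -> : ('X_(ord0 : 'I_2) * (A i 1)%:MP : {mpoly C[2]})@_0%MM = 0.
  by apply/van1; apply: (vanXM (@van0 _ _)).
have -> : ('X_(ord0 : 'I_2) * 'X_(ord_max : 'I_2) * (A i 2)%:MP : {mpoly C[2]})@_0%MM = 0.
  by apply/van1; rewrite -mulrA; apply: (vanXM (@van0 _ _)).
by rewrite !addr0.
Qed.

Lemma lin_shift r q : r *m q = 0 -> vanish_ord (lin r \mPo shift3 q) 1.
Proof.
move=> rq; apply/van1; rewrite lin_comp0.
under eq_bigr => i _ do rewrite shift_coef0.
by have := congr1 (fun M : 'M_1 => M 0 0) rq; rewrite !mxE.
Qed.

Lemma lin_chart r A p : col 0 A = p -> r *m p = 0 ->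
  vanish_ord (lin r \mPo chart A) 1.
Proof.
move=> cA rp; apply/van1; rewrite lin_comp0.
under eq_bigr => i _ do rewrite chart_coef0.
transitivity ((r *m col 0 A) 0 0).
  by rewrite mxE; apply: eq_bigr => i _; rewrite mxE.
by rewrite cA rp mxE.
Qed.


Definition qx (p : vec3) (x : S1pt) : vec3 :=
  match x with OffE q => q | OnE _ => p end.
Definition Kx p x := kermx (row_mx p (qx p x)).
Definition lrow p x : 'rV[C]_3 :=
  row (odflt 0 [pick i | row i (Kx p x) != 0]) (Kx p x).

Lemma lrow_neq0 p x : lrow p x != 0.
Proof.
rewrite /lrow; case: pickP => [i hi //|none].
have K0 : Kx p x = 0.
  apply/row_matrixP => i; rewrite row0; apply/eqP.
  by move: (none i) => /negbFE.
have := mxrank_ker (row_mx p (qx p x)); rewrite -/(Kx p x) K0 mxrank0.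
have := rank_leq_col (row_mx p (qx p x)); lia.
Qed.

Lemma lrow_ker p x : lrow p x *m p = 0 /\ lrow p x *m qx p x = 0.
Proof.
have : lrow p x *m row_mx p (qx p x) = 0.
  by rewrite /lrow -row_mul mulmx_ker row0.
by rewrite mul_mx_row => /eqP; rewrite row_mx_eq0 => /andP [/eqP -> /eqP ->].
Qed.

Definition Fprod p (Z : seq S1pt) := \prod_(x <- Z) lin (lrow p x).

Lemma Fprod_neq0 p Z : Fprod p Z != 0.
Proof.
rewrite /Fprod; elim: Z => [|x Z IH]; first by rewrite big_nil oner_neq0.
by rewrite big_cons mulf_neq0 // lin_neq0 // lrow_neq0.
Qed.

Lemma Fprod_homog p Z : Fprod p Z \is (size Z).-homog.
Proof.
rewrite /Fprod; elim: Z => [|x Z IH]; first by rewrite big_nil dhomog1.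
by rewrite big_cons /=; apply: (dhomogM (lin_homog _) IH).
Qed.

Lemma vprod_all k (f : S1pt -> {mpoly C[k]}) Z :
  (forall x, List.In x Z -> vanish_ord (f x) 1) ->
  vanish_ord (\prod_(x <- Z) f x) (size Z).
Proof.
elim: Z => [|x Z IH] h; first by rewrite big_nil; apply: van0.
rewrite big_cons /=; apply: (vanM (a := 1)).
  by apply: h; left.
by apply: IH => y yZ; apply: h; right.
Qed.

Lemma vprod_in k (f : S1pt -> {mpoly C[k]}) Z x :
  List.In x Z -> vanish_ord (f x) 1 -> vanish_ord (\prod_(y <- Z) f y) 1.
Proof.
elim: Z => [//|y Z IH] /= [->|xZ] h; rewrite big_cons.
  exact: (vanM (b := 0) h (@van0 _ _)).
exact: (vanM (a := 0) (@van0 _ _) (IH xZ h)).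
Qed.

Lemma exists_section p m Z : Z <> [::] ->
  (forall x, List.In x Z -> valid_pt p x) ->
  exists d, has_section p m Z d.
Proof.
move=> Zne hZ; have s0 : (0 < size Z)%N by move: Zne; case: (Z).
exists (size Z * m)%N; exists (Fprod p Z ^+ (3 * m)); split.
  split.
  - by rewrite expf_neq0 // Fprod_neq0.
  - by rewrite mulnCA; apply: dhomogMn; apply: Fprod_homog.
  - rewrite rmorphXn /= rmorph_prod /=.
    apply: (vanW _ (vanXn (vprod_all _))); first by nia.
    by move=> x _; apply: lin_shift; case: (lrow_ker p x).
move=> x xZ; case: x xZ => [q|A] xZ /=; rewrite rmorphXn /= rmorph_prod /=.
  apply: (vanW _ (vanXn (vprod_in xZ _))); first by nia.
  by apply: lin_shift; case: (lrow_ker p (OffE q)).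
have [_ cA] := hZ _ xZ.
apply: (vanW _ (vanXn (vprod_all _))); first by nia.
by move=> y _; apply: (lin_chart cA); case: (lrow_ker p y).
Qed.

Lemma min_exists (P : nat -> Prop) : (exists n, P n) ->
  exists a, P a /\ forall d, P d -> (a <= d)%N.
Proof.
move=> [n Pn].
suff: forall N n, (n <= N)%N -> P n -> exists a, P a /\ forall d, P d -> (a <= d)%N.
  by move=> /(_ n n (leqnn n) Pn).
elim=> [|N IH] k le Pk.
  by exists k; split => // d _; move: le; rewrite leqn0 => /eqP ->.
case: (classic (exists d, (d < k)%N /\ P d)) => [[d [ltd Pd]]|none].
  by apply: (IH d) => //; lia.
exists k; split => // d Pd; rewrite leqNgt; apply/negP => lt.
by apply: none; exists d.
Qed.

Local Close Scope ring_scope.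

Theorem corollary3 (p : vec3) (hp : p != 0%R) (Z : seq S1pt)
    (hZne : Z <> [::]) (hZ : forall x, List.In x Z -> valid_pt p x)
    (m : nat) (hm : (0 < m)%N) :
  exists a b, [/\ is_alpha p m Z a, is_alpha p (m + 5) Z b & (a < b)%N].
Proof.
have [a [ha ma]] := min_exists (exists_section m hZne hZ).
have [b [hb mb]] := min_exists (exists_section (m + 5) hZne hZ).
exists a, b; split => //.
have b0 := section_pos hZne hb.
have := ma _ (section_down hZ hZne hb); lia.
Qed.
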